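(* Let $\mathcal{A}\subseteq\mathcal{P}_\infty(\mathbb{N})$ be a $C$-measurable M-family and let $\mathbf{C}=(C_n)_n$ be a sequence in $\mathcal{A}$ of pairwise disjoint sets. Then for every $N\in\mathcal{P}_\infty(\mathbb{N})$ there exists $L\in\mathcal{P}_\infty(N)$ such that $\Delta_{\mathbf{C}}(M)\in\mathcal{A}$ for all $M\in\mathcal{P}_\infty(L)$.
   Context: $\mathcal{P}_\infty(X)$: infinite subsets of $X$, topologized as a subspace of $2^X$. $C$-measurable: belonging to the smallest $\sigma$-algebra containing the open sets and closed under the Souslin operation. An M-family is a hereditary (closed under infinite subsets) family $\mathcal{A}$ such that for every sequence $(A_n)_n$ in $\mathcal{A}$ there is $A\in\mathcal{A}$ with $A\setminus\bigcup_{i\ge n}A_i$ finite for every $n$. For pairwise disjoint infinite $C_n$ with increasing enumerations $C_n=\{x^n_0<x^n_1<\cdots\}$, define $\Delta_{\mathbf{C}}:\mathcal{P}_\infty(\mathbb{N})\to\mathcal{P}_\infty(\mathbb{N})$ by $\Delta_{\mathbf{C}}(L)=\{x^{l_{2n}}_{l_{2n+1}}:n\in\mathbb{N}\}$, where $L=\{l_0<l_1<\cdots\}$. *)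

(* Defs.v *)
From Stdlib Require Import Arith List.

Definition subset := nat -> Prop.
Definition family := subset -> Prop.

Definition infinite (X : subset) : Prop := forall n, exists m, n <= m /\ X m.
Definition finite (X : subset) : Prop := exists k, forall m, X m -> m < k.

Definition InfSub (Y X : subset) : Prop := infinite Y /\ forall m, Y m -> X m.

Definition open2N (U : family) : Prop :=
  forall x, U x -> exists n, forall y, (forall i, i < n -> (y i <-> x i)) -> U y.

Definition prefix (f : nat -> nat) (n : nat) : list nat := map f (seq 0 n).

Inductive Cmeas : family -> Prop :=
| cm_open (U : family) : open2N U -> Cmeas (fun x => infinite x /\ U x)
| cm_compl (A : family) : Cmeas A -> Cmeas (fun x => infinite x /\ ~ A x)
| cm_union (F : nat -> family) :
    (forall n, Cmeas (F n)) -> Cmeas (fun x => exists n, F n x)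
| cm_souslin (F : list nat -> family) :
    (forall s, Cmeas (F s)) ->
    Cmeas (fun x => exists f : nat -> nat, forall n, F (prefix f (S n)) x)
| cm_ext (A B : family) : Cmeas A -> (forall x, A x <-> B x) -> Cmeas B.

Definition hereditary (A : family) : Prop :=
  forall X Y, A X -> InfSub Y X -> A Y.

Definition M_family (A : family) : Prop :=
  hereditary A /\
  forall An : nat -> subset, (forall n, A (An n)) ->
    exists B, A B /\
      forall n, finite (fun m => B m /\ ~ (exists i, n <= i /\ An i m)).

Fixpoint nth_elem (X : subset) (k : nat) (m : nat) : Prop :=
  match k with
  | 0 => X m /\ forall j, j < m -> ~ X j
  | S k' => X m /\ exists p, p < m /\ nth_elem X k' p /\
                             forall j, p < j -> j < m -> ~ X j
  end.

(* Delta_C(L) = { x^{l_{2n}}_{l_{2n+1}} : n in N }, where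
   x^a_b is the b-th element of C a and l_k is the k-th element of L. *)
Definition Delta (C : nat -> subset) (L : subset) : subset :=
  fun m => exists n a b, nth_elem L (2 * n) a /\ nth_elem L (2 * n + 1) b /\
                         nth_elem (C a) b m.

(* Main.v *)
Require Import Defs.
From Stdlib Require Import Arith List Lia Classical ClassicalEpsilon.
Import ListNotations.

Definition Bas (s : subset) (k : nat) (N : subset) (X : subset) : Prop :=
  infinite X /\ (forall m, m < k -> (X m <-> s m)) /\ (forall m, k <= m -> X m -> N m).
Definition subab (j : nat) (M N : subset) : Prop := forall m, j <= m -> M m -> N m.

Lemma choice1 {A B : Type} (R : A -> B -> Prop) :
  (forall a, exists b, R a b) -> exists g, forall a, R a (g a).
Proof.
  intros H. exists (fun a => proj1_sig (constructive_indefinite_description _ (H a))).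
  intros a. exact (proj2_sig (constructive_indefinite_description _ (H a))).
Qed.

Lemma least (P : nat -> Prop) : (exists m, P m) -> exists m, P m /\ forall j, j < m -> ~ P j.
Proof.
  intros [m Hm]. apply NNPP; intro Hno.
  assert (forall n, forall j, j <= n -> ~ P j) as H.
  { induction n as [|n IH]; intros j Hj Pj.
    - apply Hno. exists j. split; [exact Pj|]. intros; lia.
    - destruct (Nat.eq_dec j (S n)) as [->|Hne].
      + apply Hno. exists (S n). split; [exact Pj|]. intros i Hi Pi. apply (IH i); [lia|exact Pi].
      + apply (IH j); [lia|exact Pj]. }
  exact (H m m (le_n _) Hm).
Qed.

Lemma Bas_mono s k M N X : subab k M N -> Bas s k M X -> Bas s k N X.
Proof. intros H [H1 [H2 H3]]. split; [exact H1|split; [exact H2|]]. intros m Hm Hx. apply H; auto. Qed.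

Lemma Bas_ext s s' k N X : (forall m, m < k -> (s m <-> s' m)) -> Bas s k N X -> Bas s' k N X.
Proof.
  intros E [H1 [H2 H3]]. repeat split; auto.
  - intros Hx. apply E; auto. apply H2; auto.
  - intros Hx. apply H2; auto. apply E; auto.
Qed.

Lemma Bas_nonempty s k M : infinite M -> exists X, Bas s k M X.
Proof.
  intros HM. exists (fun m => (m < k /\ s m) \/ (k <= m /\ M m)).
  repeat split.
  - intros n. destruct (HM (n + k)) as [m [Hm1 Hm2]]. exists m. split; [lia|]. right; split; auto; lia.
  - intros [[_ H1]|[H1 _]]; auto. lia.
  - intros H1. left; auto.
  - intros m H0 [[H1 _]|[_ H2]]; auto. lia.
Qed.

Lemma Bas_self X j N : infinite X -> subab j X N -> Bas X j N X.
Proof. intros H1 H2. repeat split; auto. Qed.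

Lemma subab_trans j A B D : subab j A B -> subab j B D -> subab j A D.
Proof. unfold subab; eauto. Qed.

Lemma fin_t (P : subset -> nat -> subset -> Prop)
  (Pmono : forall t j M M', infinite M' -> subab j M' M -> P t j M -> P t j M')
  (Pdens : forall t j M, infinite M -> exists M', infinite M' /\ subab j M' M /\ P t j M')
  (Pext : forall t t' j M, (forall m, m < j -> (t m <-> t' m)) -> P t j M -> P t' j M) :
  forall j N, infinite N -> exists M, infinite M /\ (forall m, M m -> N m /\ j <= m) /\ forall t, P t j M.
Proof.
  intros j.
  assert (Q : forall i u N, infinite N -> exists M, infinite M /\ subab j M N /\
     forall t, (forall m, i <= m -> m < j -> (t m <-> u m)) -> P t j M).
  { induction i as [|i IH]; intros u N HN.
    - destruct (Pdens u j N HN) as [M [H1 [H2 H3]]]. exists M. repeat split; auto.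
      intros t Ht. apply (Pext u); auto. intros m Hm. symmetry. apply Ht; lia.
    - destruct (IH (fun m => m = i \/ u m) N HN) as [M1 [A1 [B1 C1]]].
      destruct (IH (fun m => m <> i /\ u m) M1 A1) as [M2 [A2 [B2 C2]]].
      exists M2. repeat split; auto.
      + eapply subab_trans; eauto.
      + intros t Ht. destruct (classic (t i)) as [Ti|Ti].
        * apply (Pmono t j M1); auto. apply C1. intros m Hm1 Hm2.
          destruct (Nat.eq_dec m i) as [->|Hne].
          -- split; auto.
          -- rewrite Ht by lia. split; auto. intros [H|H]; auto. congruence.
        * apply C2. intros m Hm1 Hm2.
          destruct (Nat.eq_dec m i) as [->|Hne].
          -- split; intros H; [contradiction|]. destruct H; congruence.
          -- rewrite Ht by lia. split; auto. intros [_ H]; auto. }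
  intros N HN. destruct (Q j (fun _ => False) N HN) as [M [H1 [H2 H3]]].
  exists (fun m => M m /\ j <= m). split; [|split].
  - intros n. destruct (H1 (n + j)) as [m [Hm1 Hm2]]. exists m. split; [lia|split; auto; lia].
  - intros m [Hm1 Hm2]. split; [apply H2; auto|auto].
  - intros t. apply (Pmono t j M); auto.
    + intros n. destruct (H1 (n + j)) as [m [Hm1 Hm2]]. exists m. split; [lia|split; auto; lia].
    + intros m _ [Hm _]; auto.
    + apply H3. intros; lia.
Qed.

Lemma fusion (P : subset -> nat -> subset -> Prop)
  (Pmono : forall t j M M', infinite M' -> subab j M' M -> P t j M -> P t j M')
  (Pdens : forall t j M, infinite M -> exists M', infinite M' /\ subab j M' M /\ P t j M')
  (Pext : forall t t' j M, (forall m, m < j -> (t m <-> t' m)) -> P t j M -> P t' j M) :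
  forall k N, infinite N -> exists M, infinite M /\ (forall m, M m -> N m /\ k <= m) /\
     (forall t, P t k M) /\ (forall x t, M x -> P t (S x) M).
Proof.
  intros k N HN.
  pose proof (fin_t P Pmono Pdens Pext) as FT.
  assert (forall j N, exists M, infinite N -> infinite M /\ (forall m, M m -> N m /\ j <= m) /\ forall t, P t j M) as FT'.
  { intros j N'. destruct (classic (infinite N')) as [H|H].
    - destruct (FT j N' H) as [M HM]. exists M; auto.
    - exists N'. intros; contradiction. }
  destruct (choice1 (fun (jN : nat * subset) M => infinite (snd jN) -> infinite M /\
      (forall m, M m -> snd jN m /\ fst jN <= m) /\ forall t, P t (fst jN) M)) as [G HG].
  { intros [j N']. apply FT'. }
  destruct (choice1 (fun (M : subset) (x : nat) => infinite M -> M x)) as [pk Hpk].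
  { intros M. destruct (classic (infinite M)) as [H|H].
    - destruct (H 0) as [x [_ Hx]]. exists x; auto.
    - exists 0; intros; contradiction. }
  pose (st := fix st n := match n with
     | 0 => let M0 := G (k, N) in (pk M0, M0)
     | S n' => let M' := G (S (fst (st n')), snd (st n')) in (pk M', M') end).
  assert (Inv : forall n, infinite (snd (st n)) /\ snd (st n) (fst (st n))).
  { induction n as [|n [IH1 IH2]].
    - simpl. destruct (HG (k, N) HN) as [A1 _]. split; auto. apply Hpk; auto.
    - simpl. destruct (HG (S (fst (st n)), snd (st n)) IH1) as [A1 _]. split; auto. apply Hpk; auto. }
  assert (Step : forall n, (forall m, snd (st (S n)) m -> snd (st n) m /\ S (fst (st n)) <= m) /\
                           forall t, P t (S (fst (st n))) (snd (st (S n)))).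
  { intros n. simpl. destruct (HG (S (fst (st n)), snd (st n)) (proj1 (Inv n))) as [_ [A2 A3]].
    split; auto. }
  assert (Base : (forall m, snd (st 0) m -> N m /\ k <= m) /\ forall t, P t k (snd (st 0))).
  { simpl. destruct (HG (k, N) HN) as [_ [A2 A3]]. split; auto. }
  assert (Incr : forall n, fst (st n) < fst (st (S n))).
  { intros n. pose proof (proj1 (Step n) _ (proj2 (Inv (S n)))). lia. }
  assert (Sub : forall n n', n <= n' -> forall m, snd (st n') m -> snd (st n) m).
  { intros n n' H. induction H as [|m0 H IH]; auto. intros y Hy. apply IH. apply (proj1 (Step m0)); auto. }
  assert (Mono : forall n n', n < n' -> fst (st n) < fst (st n')).
  { intros n n' H. induction H. apply Incr. specialize (Incr m). lia. }
  assert (Ge : forall n, n <= fst (st n)).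
  { induction n; [lia|]. specialize (Incr n). lia. }
  exists (fun x => exists n, fst (st n) = x). split; [|split; [|split]].
  - intros n. exists (fst (st n)). split; eauto.
  - intros m [n <-]. apply (proj1 Base). apply (Sub 0 n); [lia|]. apply Inv.
  - intros t. apply (Pmono t k (snd (st 0))).
    + intros n. exists (fst (st n)). split; eauto.
    + intros m _ [n <-]. apply (Sub 0 n); [lia|]. apply Inv.
    + apply Base.
  - intros x t [n <-]. apply (Pmono t _ (snd (st (S n)))).
    + intros n0. exists (fst (st n0)). split; eauto.
    + intros m Hm [n' <-]. apply (Sub (S n) n').
      * destruct (le_lt_dec (S n) n'); auto.
        assert (n' <= n) by lia. destruct (Nat.eq_dec n' n) as [->|]; [lia|].
        assert (fst (st n') < fst (st n)) by (apply Mono; lia). lia.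
      * apply Inv.
    + apply Step.
Qed.

Definition AccF (F : family) t j M := forall X, Bas t j M X -> F X.
Definition Rej (F : family) t j M := forall M', infinite M' -> subab j M' M -> ~ AccF F t j M'.
Definition CR (F : family) := forall s k N, infinite N -> exists M, infinite M /\ subab k M N /\
   (AccF F s k M \/ AccF (fun X => ~ F X) s k M).
Definition RN (F : family) := forall s k N, infinite N -> exists M, infinite M /\ subab k M N /\
   AccF (fun X => ~ F X) s k M.
Definition EO (F : family) := forall X, infinite X -> F X ->
   exists s k N, Bas s k N X /\ AccF F s k N.

Lemma Acc_mono F t j M M' : subab j M' M -> AccF F t j M -> AccF F t j M'.
Proof. intros H A X HX. apply A. eapply Bas_mono; eauto. Qed.
Lemma Rej_mono F t j M M' : subab j M' M -> Rej F t j M -> Rej F t j M'.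
Proof. intros H R M'' H1 H2. apply R; auto. eapply subab_trans; eauto. Qed.
Lemma Acc_ext F t t' j M : (forall m, m < j -> (t m <-> t' m)) -> AccF F t j M -> AccF F t' j M.
Proof. intros E A X HX. apply A. eapply Bas_ext; [|exact HX]. intros m Hm. symmetry; auto. Qed.
Lemma Rej_ext F t t' j M : (forall m, m < j -> (t m <-> t' m)) -> Rej F t j M -> Rej F t' j M.
Proof. intros E R M' H1 H2 A. apply (R M' H1 H2). eapply Acc_ext; [|exact A]. intros m Hm. symmetry; auto. Qed.

Definition addc (t : subset) j m : subset := fun y => (y < j /\ t y) \/ y = m.

Lemma prev_cut (X : subset) k : forall x, k <= x -> exists c, k <= c /\ c <= x /\
   (c = k \/ exists y, c = S y /\ k <= y /\ X y) /\ forall y, c <= y -> y < x -> ~ X y.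
Proof.
  induction x as [|x IH]; intros Hx.
  - exists 0. split; [lia|split; [lia|split; [left; lia|]]]. intros; lia.
  - destruct (Nat.eq_dec k (S x)) as [<-|Hne].
    + exists k. split; [lia|split; [lia|split; [left; auto|]]]. intros; lia.
    + destruct (classic (X x)) as [Hxx|Hxx].
      * exists (S x). split; [lia|split; [lia|split; [right; exists x; split; [auto|split; [lia|auto]]|]]]. intros; lia.
      * destruct (IH ltac:(lia)) as [c [H1 [H2 [H3 H4]]]].
        exists c. split; [lia|split; [lia|split; [auto|]]]. intros y Hy1 Hy2.
        destruct (Nat.eq_dec y x) as [->|]; auto. apply H4; lia.
Qed.

Theorem EO_CR F : EO F -> CR F.
Proof.
  intros HE s k N HN.
  destruct (fusion (fun t j M => AccF F t j M \/ Rej F t j M)) with (k := k) (N := N)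
    as [M0 [I0 [S0 [D0k D0]]]]; auto.
  { intros t j M M' HM' Hs [A|R]; [left; eapply Acc_mono|right; eapply Rej_mono]; eauto. }
  { intros t j M HM. destruct (classic (Rej F t j M)) as [R|R].
    - exists M. split; auto. split; [intros m _ H; auto|right; auto].
    - apply NNPP; intro C. apply R. intros M' H1 H2 A. apply C. exists M'. auto. }
  { intros t t' j M E [A|R]; [left; eapply Acc_ext|right; eapply Rej_ext]; eauto. }
  destruct (D0k s) as [A|R0].
  { exists M0. split; auto. split; [intros m _ H; apply S0; auto|left; auto]. }
  assert (KF : forall t j, Rej F t j M0 -> exists b, forall m, b <= m -> j <= m -> M0 m ->
                 Rej F (addc t j m) (S m) M0).
  { intros t j R. apply NNPP; intro C.
    assert (Hinf : forall b, exists m, b <= m /\ j <= m /\ M0 m /\ AccF F (addc t j m) (S m) M0).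
    { intros b. apply NNPP; intro C2. apply C. exists b. intros m H1 H2 H3.
      destruct (D0 m (addc t j m) H3) as [A|R']; auto. exfalso; apply C2. exists m; auto. }
    apply (R (fun m => j <= m /\ M0 m /\ AccF F (addc t j m) (S m) M0)).
    - intros n. destruct (Hinf n) as [m [H1 [H2 [H3 H4]]]]. exists m. split; auto.
    - intros m _ [_ [H _]]; auto.
    - intros X [XI [XB XA]].
      destruct (least (fun x => j <= x /\ X x)) as [x [[Hx1 Hx2] Hx3]].
      { destruct (XI j) as [x Hx]. exists x; auto. }
      destruct (XA x Hx1 Hx2) as [_ [_ Ax]].
      apply Ax. split; [auto|split].
      + intros y Hy. unfold addc. split.
        * intros Xy. destruct (Nat.eq_dec y x) as [->|Hne]; [right; auto|left].
          destruct (le_lt_dec j y) as [Hjy|Hjy].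
          -- exfalso. apply (Hx3 y); [lia|auto].
          -- split; auto. apply XB; auto.
        * intros [[H1 H2]| ->]; auto. apply XB; auto.
      + intros y Hy Xy. apply XA; auto; lia. }
  destruct (fusion (fun t j M => Rej F t j M0 -> forall m, j <= m -> M m -> M0 m ->
                 Rej F (addc t j m) (S m) M0)) with (k := k) (N := M0)
    as [M1 [I1 [S1 [D1k D1]]]]; auto.
  { intros t j M HM. destruct (classic (Rej F t j M0)) as [R|R].
    - destruct (KF t j R) as [b Hb].
      exists (fun m => M m /\ b <= m). split; [|split].
      + intros n. destruct (HM (n + b)) as [m [H1 H2]]. exists m. split; [lia|split; auto; lia].
      + intros m _ [H _]; auto.
      + intros _ m H1 [H2 H3] H4. apply Hb; auto.
    - exists M. split; auto. split; [intros m _ H; auto|]. intros; contradiction. }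
  { intros t t' j M E H R m Hm1 Hm2 Hm3.
    apply (Rej_ext F (addc t j m)).
    - intros y Hy. unfold addc. split; intros [[H1 H2]|H1]; auto; left; split; auto; apply E; auto.
    - apply H; auto. eapply Rej_ext; [|exact R]. intros y Hy; symmetry; auto. }
  exists M1. split; auto. split.
  { intros m Hm H. apply S0. apply S1; auto. }
  right. intros X HX FX.
  destruct HX as [XI [XB XA]].
  destruct (HE X XI FX) as [s' [k' [N' [[_ [B1 B2]] AX]]]].
  assert (Cut : forall x, k <= x -> X x -> Rej F X (S x) M0).
  { intros x. induction x as [x IH] using (well_founded_induction lt_wf). intros Hkx Xx.
    destruct (prev_cut X k x Hkx) as [c [C1 [C2 [C3 C4]]]].
    assert (Rc : Rej F X c M0).
    { destruct C3 as [->|[y [-> [Hky Xy]]]].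
      - eapply Rej_ext; [|exact R0]. intros m Hm. symmetry; auto.
      - apply IH; auto; lia. }
    assert (P2 : Rej F X c M0 -> forall m, c <= m -> M1 m -> M0 m -> Rej F (addc X c m) (S m) M0).
    { destruct C3 as [->|[y [-> [Hky Xy]]]]; [apply D1k|]. apply D1. apply XA; auto; lia. }
    assert (HM1x : M1 x) by (apply XA; auto). assert (HM0x : M0 x) by (apply S1; auto).
    eapply Rej_ext; [|exact (P2 Rc x C2 HM1x HM0x)].
    intros y Hy. unfold addc. split.
    - intros [[H1 H2]| ->]; auto.
    - intros Xy. destruct (Nat.eq_dec y x); [right; auto|left; split; auto].
      destruct (le_lt_dec c y); auto. exfalso; apply (C4 y); auto; lia. }
  destruct (XI (k + k')) as [x [Hx1 Hx2]].
  apply (Cut x ltac:(lia) Hx2 (fun m => S x <= m /\ X m)).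
  - intros n. destruct (XI (n + S x)) as [m [H1 H2]]. exists m. split; [lia|split; auto; lia].
  - intros m Hm [_ Xm]. apply S1. apply XA; auto; lia.
  - intros Y [YI [YB YA]]. apply AX. split; auto. split.
    + intros y Hy. rewrite YB by lia. apply B1; auto.
    + intros y Hy Yy. destruct (le_lt_dec (S x) y) as [H|H].
      * apply B2; auto. apply YA; auto.
      * apply B2; auto. apply YB; auto.
Qed.

Lemma Bas_inf s k M X : Bas s k M X -> infinite X.
Proof. intros [H _]; auto. Qed.

Lemma CR_ext (F G : family) : (forall X, infinite X -> (F X <-> G X)) -> CR F -> CR G.
Proof.
  intros E H s k N HN. destruct (H s k N HN) as [M [H1 [H2 [A|A]]]].
  - exists M. split; auto. split; auto. left. intros X HX. apply E; [eapply Bas_inf; eauto|]. auto.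
  - exists M. split; auto. split; auto. right. intros X HX HG. apply (A X HX).
    apply E; [eapply Bas_inf; eauto|]. auto.
Qed.

Lemma RN_ext (F G : family) : (forall X, infinite X -> (F X <-> G X)) -> RN F -> RN G.
Proof.
  intros E H s k N HN. destruct (H s k N HN) as [M [H1 [H2 A]]].
  exists M. split; auto. split; auto. intros X HX HG. apply (A X HX).
  apply E; [eapply Bas_inf; eauto|]. auto.
Qed.

Lemma RN_sub (F G : family) : (forall X, infinite X -> G X -> F X) -> RN F -> RN G.
Proof.
  intros E H s k N HN. destruct (H s k N HN) as [M [H1 [H2 A]]].
  exists M. split; auto. split; auto. intros X HX HG. apply (A X HX).
  apply E; [eapply Bas_inf; eauto|]. auto.
Qed.

Lemma RN_CR F : RN F -> CR F.
Proof. intros H s k N HN. destruct (H s k N HN) as [M [H1 [H2 A]]]. exists M. auto. Qed.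

Lemma CR_compl F : CR F -> CR (fun X => ~ F X).
Proof.
  intros H s k N HN. destruct (H s k N HN) as [M [H1 [H2 [A|A]]]].
  - exists M. split; [auto|split; [auto|]]. right. intros X HX C. apply C. auto.
  - exists M. split; [auto|split; [auto|]]. left. auto.
Qed.

Lemma CR_true : CR (fun _ => True).
Proof. intros s k N HN. exists N. split; [auto|split; [intros m _ H; auto|]]. left. intros X _. exact I. Qed.

Lemma iter_dens (Q : nat -> subset -> Prop) j
  (Qmono : forall n M M', infinite M' -> subab j M' M -> Q n M -> Q n M')
  (Qdens : forall n M, infinite M -> exists M', infinite M' /\ subab j M' M /\ Q n M') :
  forall i M, infinite M -> exists M', infinite M' /\ subab j M' M /\ forall n, n < i -> Q n M'.
Proof.
  induction i as [|i IH]; intros M HM.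
  - exists M. split; auto. split; [intros m _ H; auto|]. intros; lia.
  - destruct (IH M HM) as [M1 [A1 [B1 C1]]]. destruct (Qdens i M1 A1) as [M2 [A2 [B2 C2]]].
    exists M2. split; auto. split; [eapply subab_trans; eauto|].
    intros n Hn. destruct (Nat.eq_dec n i) as [->|]; auto. apply (Qmono n M1); auto. apply C1; lia.
Qed.

Lemma RN_union (F : nat -> family) : (forall n, RN (F n)) -> RN (fun X => exists n, F n X).
Proof.
  intros H s k N HN.
  destruct (fusion (fun t j M => forall n, n < j -> AccF (fun X => ~ F n X) t j M)) with (k := k) (N := N)
    as [M [I0 [S0 [_ D0]]]]; auto.
  { intros t j M M' HM' Hs A n Hn. eapply Acc_mono; eauto. }
  { intros t j M HM. apply iter_dens; auto.
    - intros n M1 M' _ Hs A. eapply Acc_mono; eauto.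
    - intros n M1 HM1. apply (H n t j M1 HM1). }
  { intros t t' j M E A n Hn. eapply Acc_ext; eauto. }
  exists M. split; auto. split; [intros m _ Hm; apply S0; auto|].
  intros X [XI [XB XA]] [n Fn].
  destruct (XI (k + n)) as [x [Hx1 Hx2]].
  apply (D0 x X (XA x ltac:(lia) Hx2) n ltac:(lia) X); auto.
  split; auto. split; [intros; tauto|]. intros m Hm Xm. apply XA; auto; lia.
Qed.

Lemma CR_union (F : nat -> family) : (forall n, CR (F n)) -> CR (fun X => exists n, F n X).
Proof.
  intros H s k N HN.
  destruct (fusion (fun t j M => forall n, n < j -> AccF (F n) t j M \/ AccF (fun X => ~ F n X) t j M))
    with (k := k) (N := N) as [M [I0 [S0 [_ D0]]]]; auto.
  { intros t j M M' HM' Hs A n Hn. destruct (A n Hn); [left|right]; eapply Acc_mono; eauto. }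
  { intros t j M HM. apply iter_dens; auto.
    - intros n M1 M' _ Hs [A|A]; [left|right]; eapply Acc_mono; eauto.
    - intros n M1 HM1. apply (H n t j M1 HM1). }
  { intros t t' j M E A n Hn. destruct (A n Hn); [left|right]; eapply Acc_ext; eauto. }
  set (U := fun X => infinite X /\ exists j n, k <= j /\ subab j X M /\ AccF (F n) X j M).
  assert (EU : EO U).
  { intros X XI [_ [j [n [H1 [H2 H3]]]]]. exists X, j, M. split; [apply Bas_self; auto|].
    intros Y HY. split; [eapply Bas_inf; eauto|]. exists j, n. split; auto. split.
    - destruct HY as [_ [_ HY]]. auto.
    - eapply Acc_ext; [|exact H3]. intros m Hm. destruct HY as [_ [HY _]]. symmetry; auto. }
  destruct (EO_CR U EU s k M I0) as [M' [I1 [S1 [A|A]]]].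
  - exists M'. split; auto. split.
    + intros m Hm H'. apply S0. apply S1; auto.
    + left. intros X HX. destruct (A X HX) as [_ [j [n [H1 [H2 H3]]]]]. exists n. apply H3.
      apply Bas_self; auto. eapply Bas_inf; eauto.
  - exists M'. split; auto. split.
    + intros m Hm H'. apply S0. apply S1; auto.
    + right. intros X HX [n Fn]. destruct HX as [XI [XB XA]].
      destruct (XI (k + n)) as [x [Hx1 Hx2]].
      assert (Mx : M x) by (apply S1; [lia|apply XA; [lia|auto]]).
      destruct (D0 x X Mx n ltac:(lia)) as [B|B].
      * apply (A X). { split; auto. } split; auto. exists (S x), n. split; [lia|]. split; auto.
        intros m Hm Xm. apply S1; [lia|]. apply XA; auto; lia.
      * apply (B X); auto. split; auto. split; [intros; tauto|].
        intros m Hm Xm. apply S1; [lia|]. apply XA; auto; lia.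
Qed.

Lemma CR_union2 F G : CR F -> CR G -> CR (fun X => F X \/ G X).
Proof.
  intros HF HG. apply (CR_ext (fun X => exists n, (match n with 0 => F | _ => G end) X)).
  - intros X _. split.
    + intros [[|n] H]; auto.
    + intros [H|H]; [exists 0|exists 1]; auto.
  - apply CR_union. intros [|n]; auto.
Qed.

Lemma CR_inter2 F G : CR F -> CR G -> CR (fun X => F X /\ G X).
Proof.
  intros HF HG. apply (CR_ext (fun X => ~ (~ F X \/ ~ G X))).
  - intros X _. tauto.
  - apply CR_compl. apply CR_union2; apply CR_compl; auto.
Qed.

Definition cl (F : family) : family := fun X => infinite X /\
  forall s k N, Bas s k N X -> exists Y, Bas s k N Y /\ F Y.

Lemma CR_cl F : CR (cl F).
Proof.
  assert (EO (fun X => ~ cl F X)).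
  { intros X XI NC.
    assert (exists s k N, Bas s k N X /\ ~ exists Y, Bas s k N Y /\ F Y) as [s [k [N [B NY]]]].
    { apply NNPP; intro C. apply NC. split; auto. intros s k N B. apply NNPP; intro C2.
      apply C. exists s, k, N. auto. }
    exists s, k, N. split; auto. intros Y HY [_ CY]. apply NY. apply CY; auto. }
  apply (CR_ext (fun X => ~ ~ cl F X)); [intros; tauto|].
  apply CR_compl. apply EO_CR; auto.
Qed.

Lemma cl_sup F X : infinite X -> F X -> cl F X.
Proof. intros XI FX. split; auto. intros s k N B. exists X; auto. Qed.

Lemma hull F G : CR G -> (forall X, infinite X -> G X -> cl F X /\ ~ F X) -> RN G.
Proof.
  intros HG E s k N HN. destruct (HG s k N HN) as [M [H1 [H2 [A|A]]]].
  - exfalso. destruct (Bas_nonempty s k M H1) as [X HX].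
    destruct (E X (Bas_inf _ _ _ _ HX) (A X HX)) as [[_ CX] _].
    destruct (CX s k M HX) as [Y [HY FY]].
    apply (E Y (Bas_inf _ _ _ _ HY) (A Y HY)); auto.
  - exists M; auto.
Qed.

Lemma RN_len (G : list nat -> family) : (forall u, RN (G u)) ->
  forall n, RN (fun X => exists u, length u = n /\ G u X).
Proof.
  intros H n. revert G H. induction n as [|n IH]; intros G H.
  - apply (RN_ext (G [])); [|auto]. intros X _. split.
    + intros HG. exists []. auto.
    + intros [u [Hu HG]]. destruct u; [auto|discriminate].
  - apply (RN_ext (fun X => exists i, (fun X => exists u, length u = n /\ G (i :: u) X) X)).
    + intros X _. split.
      * intros [i [u [Hu HG]]]. exists (i :: u). simpl. auto.
      * intros [[|i u] [Hu HG]]; [discriminate|]. exists i, u. simpl in Hu. auto.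
    + apply RN_union. intros i. apply (IH (fun u => G (i :: u))). auto.
Qed.

Lemma RN_lists (G : list nat -> family) : (forall u, RN (G u)) -> RN (fun X => exists u, G u X).
Proof.
  intros H. apply (RN_ext (fun X => exists n, (fun X => exists u, length u = n /\ G u X) X)).
  - intros X _. split.
    + intros [n [u [_ Hu]]]; eauto.
    + intros [u Hu]. exists (length u), u. auto.
  - apply RN_union. intros n. apply RN_len. auto.
Qed.

Lemma prefix_S f n : prefix f (S n) = prefix f n ++ [f n].
Proof. unfold prefix. rewrite seq_S, map_app. reflexivity. Qed.

Lemma prefix_len f n : length (prefix f n) = n.
Proof. unfold prefix. rewrite length_map, length_seq. reflexivity. Qed.

Theorem CR_souslin (F : list nat -> family) : (forall u, CR (F u)) ->
  CR (fun X => exists f : nat -> nat, forall n, F (prefix f (S n)) X).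
Proof.
  intros HF.
  set (Z := fun u X => exists f, prefix f (length u) = u /\ forall n, F (prefix f (S n)) X).
  set (H := fun u X => cl (Z u) X /\ (u <> [] -> F u X)).
  assert (HCR : forall u, CR (H u)).
  { intros u. apply CR_inter2; [apply CR_cl|].
    destruct u as [|a u].
    - apply (CR_ext (fun _ => True)); [|apply CR_true]. intros X _. split; auto. intros _ C. congruence.
    - apply (CR_ext (F (a :: u))); [|auto]. intros X _. split; auto. intros Hc. apply Hc. discriminate. }
  assert (ZH : forall u X, infinite X -> Z u X -> H u X).
  { intros u X XI HZ. split; [apply cl_sup; auto|]. intros Hu.
    destruct HZ as [f [Hf HFf]]. destruct u as [|a u']; [congruence|].
    rewrite <- Hf. simpl length. apply HFf. }
  set (D := fun u X => H u X /\ ~ exists i, H (u ++ [i]) X).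
  assert (DRN : forall u, RN (D u)).
  { intros u. apply hull with (F := Z u).
    - apply CR_inter2; auto. apply CR_compl. apply CR_union. auto.
    - intros X XI [[HC _] ND]. split; auto. intros [f [Hf HFf]]. apply ND.
      exists (f (length u)). apply ZH; auto. exists f. split; auto.
      rewrite length_app. simpl. rewrite Nat.add_1_r, prefix_S, Hf. reflexivity. }
  pose proof (RN_lists D DRN) as RRN.
  set (R := fun X => exists u, D u X).
  set (S := fun X => exists f : nat -> nat, forall n, F (prefix f (S n)) X).
  apply (CR_ext (fun X => (H [] X /\ ~ R X) \/ (S X /\ R X))).
  - intros X XI. split.
    + intros [[HX NR] | [SX _]]; [|auto].
      assert (NR' : forall u, H u X -> exists i, H (u ++ [i]) X).
      { intros u Hu. apply NNPP; intro C. apply NR. exists u. split; auto. }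
      destruct (choice1 (fun u i => H u X -> H (u ++ [i]) X)) as [nx Hnx].
      { intros u. destruct (classic (H u X)) as [Hu|Hu].
        - destruct (NR' u Hu) as [i Hi]. exists i; auto.
        - exists 0; intros; contradiction. }
      set (p := fix p n := match n with 0 => [] | Datatypes.S n' => p n' ++ [nx (p n')] end).
      exists (fun n => nx (p n)).
      assert (Inv : forall n, prefix (fun n => nx (p n)) n = p n /\ H (p n) X).
      { induction n as [|n [IH1 IH2]].
        - split; auto.
        - rewrite prefix_S, IH1. split; auto. simpl. apply Hnx; auto. }
      intros n. destruct (Inv (Datatypes.S n)) as [E HX']. rewrite E. apply HX'.
      simpl. intros C. apply app_eq_nil in C. destruct C; discriminate.
    + intros SX. destruct (classic (R X)) as [RX|RX]; [right; auto|left; split; auto].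
      apply ZH; auto. destruct SX as [f Hf]. exists f. auto.
  - apply CR_union2.
    + apply CR_inter2; auto. apply CR_compl. apply RN_CR. exact RRN.
    + apply RN_CR. apply (RN_sub R); [intros X _ [_ HR]; auto|exact RRN].
Qed.

Lemma nth_in X k m : nth_elem X k m -> X m.
Proof. destruct k; simpl; tauto. Qed.

Lemma nth_ge X k : forall m, nth_elem X k m -> k <= m.
Proof.
  induction k as [|k IH]; intros m H; [lia|]. destruct H as [_ [p [H1 [H2 _]]]].
  specialize (IH p H2). lia.
Qed.

Lemma nth_fun X k : forall m m', nth_elem X k m -> nth_elem X k m' -> m = m'.
Proof.
  induction k as [|k IH]; intros m m' H H'.
  - destruct H as [A B], H' as [A' B'].
    destruct (lt_eq_lt_dec m m') as [[L|L]|L]; auto.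
    + exfalso; apply (B' m); auto.
    + exfalso; apply (B m'); auto.
  - destruct H as [A [p [P1 [P2 P3]]]], H' as [A' [p' [P1' [P2' P3']]]].
    assert (p = p') by (apply IH; auto). subst p'.
    destruct (lt_eq_lt_dec m m') as [[L|L]|L]; auto.
    + exfalso; apply (P3' m); auto.
    + exfalso; apply (P3 m'); auto.
Qed.

Lemma nth_ex X : infinite X -> forall k, exists m, nth_elem X k m.
Proof.
  intros XI. induction k as [|k [p Hp]].
  - destruct (least X) as [m [H1 H2]]. { destruct (XI 0) as [m [_ H]]; eauto. }
    exists m. simpl. auto.
  - destruct (least (fun m => p < m /\ X m)) as [m [[H1 H2] H3]].
    { destruct (XI (S p)) as [m [H1 H2]]. exists m. split; auto. }
    exists m. simpl. split; auto. exists p. split; auto. split; auto.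
    intros j Hj1 Hj2 Xj. apply (H3 j); auto.
Qed.

Lemma nth_local X Y k : forall m, nth_elem X k m -> (forall y, y <= m -> (X y <-> Y y)) -> nth_elem Y k m.
Proof.
  induction k as [|k IH]; intros m H E.
  - destruct H as [A B]. split; [apply E; auto|]. intros j Hj Yj. apply (B j Hj). apply E; auto; lia.
  - destruct H as [A [p [P1 [P2 P3]]]]. split; [apply E; auto|]. exists p. split; auto. split.
    + apply IH; auto. intros y Hy. apply E. lia.
    + intros j Hj1 Hj2 Yj. apply (P3 j); auto. apply E; auto; lia.
Qed.

Lemma incr_mono (c : nat -> nat) : (forall i, c i < c (S i)) -> forall i i', i < i' -> c i < c i'.
Proof.
  intros H i i' L. induction L. apply H. specialize (H m). lia.
Qed.

Lemma nth_incr (c : nat -> nat) : (forall i, c i < c (S i)) ->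
  forall k, nth_elem (fun x => exists i, c i = x) k (c k).
Proof.
  intros H. pose proof (incr_mono c H) as Mo.
  induction k as [|k IH].
  - simpl. split; eauto. intros j Hj [i <-]. destruct i; [lia|]. specialize (Mo 0 (S i) ltac:(lia)). lia.
  - simpl. split; eauto. exists (c k). split; [apply H|]. split; auto.
    intros j Hj1 Hj2 [i <-]. destruct (lt_eq_lt_dec i k) as [[L|L]|L].
    + specialize (Mo _ _ L). lia.
    + subst; lia.
    + destruct (Nat.eq_dec i (S k)) as [->|]; [lia|]. specialize (Mo (S k) i ltac:(lia)). lia.
Qed.

Lemma Delta_inf C M : (forall a, infinite (C a)) -> infinite M -> infinite (Delta C M).
Proof.
  intros HC MI n. destruct (nth_ex M MI (2 * n)) as [a Ha]. destruct (nth_ex M MI (2 * n + 1)) as [b Hb].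
  destruct (nth_ex (C a) (HC a) b) as [m Hm]. exists m. split.
  - pose proof (nth_ge _ _ _ Hb). pose proof (nth_ge _ _ _ Hm). lia.
  - exists n, a, b. auto.
Qed.

Lemma Delta_local C M M' n : (forall y, y < n -> (M y <-> M' y)) ->
  forall m, m < n -> Delta C M m -> Delta C M' m.
Proof.
  intros E m Hm [i [a [b [Ha [Hb Hc]]]]].
  assert (b <= m) by (apply (nth_ge _ _ _ Hc)).
  assert (a < b).
  { replace (2 * i + 1) with (S (2 * i)) in Hb by lia. destruct Hb as [_ [p [P1 [P2 _]]]].
    rewrite (nth_fun _ _ _ _ Ha P2). auto. }
  exists i, a, b. split; [|split; auto].
  - apply (nth_local M); auto. intros y Hy. apply E. lia.
  - apply (nth_local M); auto. intros y Hy. apply E. lia.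
Qed.

Theorem Cmeas_CR (C : nat -> subset) : (forall a, infinite (C a)) ->
  forall A, Cmeas A -> CR (fun M => A (Delta C M)).
Proof.
  intros HC A HA. induction HA as [U HU|A HA IH|F HF IH|F HF IH|A B HA IH E].
  - apply EO_CR. intros M MI [DI UD]. destruct (HU _ UD) as [n Hn].
    exists M, n, M. split; [apply Bas_self; auto; intros m _ H; auto|].
    intros Y [YI [YB YA]]. split; [apply Delta_inf; auto|]. apply Hn. intros i Hi. split.
    + apply (Delta_local C Y M n); auto.
    + apply (Delta_local C M Y n); auto. intros y Hy. symmetry. apply YB; auto.
  - apply (CR_ext (fun M => ~ A (Delta C M))); [|apply CR_compl; auto].
    intros X XI. split; [intros H; split; auto; apply Delta_inf; auto|intros [_ H]; auto].
  - apply (CR_union (fun n M => F n (Delta C M))). auto.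
  - apply (CR_souslin (fun s M => F s (Delta C M))). auto.
  - apply (CR_ext (fun M => A (Delta C M))); [intros X _; apply E|auto].
Qed.

Theorem lemma7 (A : family) (C : nat -> subset) :
  (forall X, A X -> infinite X) ->
  Cmeas A ->
  M_family A ->
  (forall n, A (C n)) ->
  (forall n n', n <> n' -> forall k, C n k -> C n' k -> False) ->
  forall N, infinite N ->
    exists L, InfSub L N /\ forall M, InfSub M L -> A (Delta C M).
Proof.
  intros Ainf HA [Her Mf] HCA _ N NI.
  assert (HC : forall a, infinite (C a)) by (intros a; apply Ainf; auto).
  destruct (Cmeas_CR C HC A HA (fun _ => False) 0 N NI) as [L [LI [LS [A1|A2]]]].
  { exists L. split.
    - split; auto. intros m Hm. apply LS; auto; lia.
    - intros M [MI MS]. apply A1. split; auto. split; [intros; lia|]. intros m _ Hm; auto. }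
  exfalso.
  set (Cp := fun a m => exists j, L j /\ a < j /\ nth_elem (C a) j m).
  assert (CpA : forall a, A (Cp a)).
  { intros a. apply (Her (C a)); auto. split.
    - intros n. destruct (LI (S a + n)) as [j [Hj1 Hj2]].
      destruct (nth_ex (C a) (HC a) j) as [m Hm]. exists m. split.
      + pose proof (nth_ge _ _ _ Hm). lia.
      + exists j. split; auto. split; auto; lia.
    - intros m [j [_ [_ Hm]]]. eapply nth_in; eauto. }
  destruct (choice1 (fun n a => L a /\ n <= a)) as [g Hg].
  { intros n. destruct (LI n) as [a [H1 H2]]. exists a; auto. }
  destruct (Mf (fun i => Cp (g i)) (fun i => CpA (g i))) as [B [AB HB]].
  pose proof (Ainf B AB) as BI.
  assert (Next : forall p, exists q : nat * nat, L (fst q) /\ L (snd q) /\ p < fst q /\ fst q < snd q /\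
            exists m, nth_elem (C (fst q)) (snd q) m /\ B m).
  { intros p. destruct (HB (S p)) as [K HK]. destruct (BI K) as [m [Hm1 Hm2]].
    destruct (classic (exists i, S p <= i /\ Cp (g i) m)) as [[i [Hi [j [Lj [Hj Hc]]]]]|Hn].
    - exists (g i, j). simpl. destruct (Hg i). split; auto. split; auto. split; [lia|]. split; auto.
      exists m. auto.
    - exfalso. assert (m < K) by (apply HK; auto). lia. }
  destruct (choice1 _ Next) as [h Hh].
  set (sq := fix sq n := match n with 0 => h 0 | S n' => h (snd (sq n')) end).
  set (c := fun i => if Nat.even i then fst (sq (Nat.div2 i)) else snd (sq (Nat.div2 i))).
  assert (c0 : forall n, c (2 * n) = fst (sq n)).
  { intros n. unfold c. rewrite Nat.even_even, Nat.div2_double. reflexivity. }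
  assert (c1 : forall n, c (2 * n + 1) = snd (sq n)).
  { intros n. unfold c. rewrite Nat.even_odd, Nat.div2_odd'. reflexivity. }
  assert (Hsq : forall n, let q := sq n in L (fst q) /\ L (snd q) /\ fst q < snd q /\
            (exists m, nth_elem (C (fst q)) (snd q) m /\ B m) /\ snd q < fst (sq (S n))).
  { intros n. simpl.
    assert (forall n, L (fst (sq n)) /\ L (snd (sq n)) /\ fst (sq n) < snd (sq n) /\
        (exists m, nth_elem (C (fst (sq n))) (snd (sq n)) m /\ B m)) as H.
    { intros [|n']; simpl; destruct (Hh 0) as [? [? [? [? ?]]]] || idtac;
      [destruct (Hh 0) as [? [? [? [? ?]]]]; auto
      |destruct (Hh (snd (sq n'))) as [? [? [? [? ?]]]]; auto]. }
    destruct (H n) as [? [? [? ?]]]. split; auto. split; auto. split; auto. split; auto.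
    destruct (Hh (snd (sq n))) as [_ [_ [? _]]]. auto. }
  assert (cinc : forall i, c i < c (S i)).
  { intros i. destruct (Nat.Even_or_Odd i) as [[n ->]|[n ->]].
    - replace (S (2 * n)) with (2 * n + 1) by lia. rewrite c0, c1. apply (Hsq n).
    - replace (S (2 * n + 1)) with (2 * (S n)) by lia. rewrite c0, c1. apply (Hsq n). }
  set (M := fun x => exists i, c i = x).
  assert (MI : infinite M).
  { intros n. exists (c n). split; [|exists n; auto].
    clear -cinc. induction n; [lia|]. specialize (cinc n). lia. }
  assert (ML : forall x, M x -> L x).
  { intros x [i <-]. destruct (Nat.Even_or_Odd i) as [[n ->]|[n ->]].
    - rewrite c0. apply (Hsq n).
    - rewrite c1. apply (Hsq n). }
  apply (A2 M).
  - split; auto. split; [intros; lia|]. intros m _ Hm. auto.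
  - apply (Her B); auto. split; [apply Delta_inf; auto|].
    intros m [n [a [b [Ha [Hb Hm]]]]].
    pose proof (nth_incr c cinc (2 * n)) as E0. pose proof (nth_incr c cinc (2 * n + 1)) as E1.
    fold M in E0, E1.
    rewrite (nth_fun _ _ _ _ Ha E0), c0 in Hm. rewrite (nth_fun _ _ _ _ Hb E1), c1 in Hm.
    destruct (Hsq n) as [_ [_ [_ [[m' [Hm' Bm']] _]]]].
    rewrite (nth_fun _ _ _ _ Hm Hm'). auto.
Qed.
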